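(* Let $\mathcal X$ be a nominal set and $N\subseteq\mathbb A$ finite. Let $b\in\mathbb A\setminus N$, and let $X\subseteq\mathcal X$ with $\mathrm{supp}(X)\subseteq N\cup\{b\}$. Then there exists an injective function $$f:\ \mathrm{orbs}_N\Big(\bigcup_{a\in\mathbb A\setminus N}(a\ b)\cdot X\Big)\to\mathrm{orbs}_{N\cup\{b\}}(X).$$
   Context: Fix a countably infinite set $\mathbb A$ of names. $\mathrm{Perm}$ is the group of finite permutations of $\mathbb A$. $(a\ b)$ denotes the transposition swapping $a$ and $b$ and fixing all other names. A nominal set is a set with a $\mathrm{Perm}$-action in which every element has finite support. $\mathrm{supp}$ denotes the least finite supporting set. Permutations act on subsets pointwise, $\pi\cdot X=\{\pi\cdot x\mid x\in X\}$. For finite $N\subseteq\mathbb A$ and $x\in\mathcal X$: - $\mathrm{orb}_N(x)=\{\pi\cdot x\mid\pi\in\mathrm{Perm},\ \pi(a)=a\ \forall a\in N\}$. For $S\subseteq\mathcal X$: - $\mathrm{orbs}_N(S)=\{\mathrm{orb}_N(x)\mid x\in S\}$. *)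

(* Defs.v *)
From mathcomp Require Import all_boot.
Set Implicit Arguments. Unset Strict Implicit. Unset Printing Implicit Defensive.

(* Names: the countably infinite set A is modelled by nat. *)
Definition atom := nat.

Record fperm := FPerm {
  pf : atom -> atom;
  pinv : atom -> atom;
  pfK : cancel pf pinv;
  pinvK : cancel pinv pf;
  pfin : exists s : seq atom, forall a, a \notin s -> pf a = a }.

Definition fperm_id : fperm.
Proof.
refine (@FPerm id id (fun _ => erefl) (fun _ => erefl) _).
by exists [::].
Defined.

Definition fperm_comp (p q : fperm) : fperm.
Proof.
refine (@FPerm (pf p \o pf q) (pinv q \o pinv p) _ _ _).
- by move=> x /=; rewrite pfK pfK.
- by move=> x /=; rewrite pinvK pinvK.
- case: (pfin p) => s Hs; case: (pfin q) => t Ht.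
  exists (s ++ t) => a; rewrite mem_cat negb_or => /andP[as' at'] /=.
  by rewrite Ht // Hs.
Defined.

Definition swap_fun (a b : atom) (c : atom) : atom :=
  if c == a then b else if c == b then a else c.

Lemma swap_funK a b : cancel (swap_fun a b) (swap_fun a b).
Proof.
move=> c; rewrite /swap_fun.
by repeat (case: eqP => /=; try congruence).
Qed.

Definition transp (a b : atom) : fperm.
Proof.
refine (@FPerm (swap_fun a b) (swap_fun a b) (swap_funK a b) (swap_funK a b) _).
exists [:: a; b] => c; rewrite !inE negb_or => /andP[ca cb].
by rewrite /swap_fun (negbTE ca) (negbTE cb).
Defined.

Definition fixes (p : fperm) (S : atom -> Prop) : Prop :=
  forall a, S a -> pf p a = a.

Record nominal := Nominal {
  carrier :> Type;
  act : fperm -> carrier -> carrier;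
  act_id : forall x, act fperm_id x = x;
  act_comp : forall p q x, act (fperm_comp p q) x = act p (act q x);
  act_finsupp : forall x, exists s : seq atom,
      forall p, fixes p (fun a => a \in s) -> act p x = x }.

Definition set_act (X : nominal) (p : fperm) (S : X -> Prop) : X -> Prop :=
  fun y => exists2 x, S x & y = act p x.

Definition supports_set (X : nominal) (A : atom -> Prop) (S : X -> Prop) : Prop :=
  forall p, fixes p A -> forall y, set_act p S y <-> S y.

Definition orb (X : nominal) (N : seq atom) (x : X) : X -> Prop :=
  fun y => exists2 p : fperm, fixes p (fun a => a \in N) & y = act p x.

Definition orbs (X : nominal) (N : seq atom) (S : X -> Prop) : (X -> Prop) -> Prop :=
  fun O => exists2 x, S x & O = orb N x.

Definition swap_union (X : nominal) (N : seq atom) (b : atom) (S : X -> Prop) : X -> Prop :=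
  fun y => exists2 a : atom, a \notin N & set_act (transp a b) S y.

(* Main.v *)
Require Import Defs.
From mathcomp Require Import all_boot.
From Stdlib Require Import ProofIrrelevance FunctionalExtensionality PropExtensionality ClassicalEpsilon.

Definition fperm_inv (p : fperm) : fperm.
Proof.
refine (@FPerm (pinv p) (pf p) (pinvK p) (pfK p) _).
case: (pfin p) => s Hs; exists s => a Ha.
by rewrite -{1}(Hs a Ha) pfK.
Defined.

Lemma fperm_eq (p q : fperm) : (forall a, pf p a = pf q a) -> p = q.
Proof.
move=> H.
have Hi : forall a, pinv p a = pinv q a.
  by move=> a; rewrite -{1}(pinvK q a) -H pfK.
have E1 := functional_extensionality _ _ H.
have E2 := functional_extensionality _ _ Hi.
case: p q H Hi E1 E2 => f1 g1 k1 k1' h1 [f2 g2 k2 k2' h2] /= _ _ E1 E2.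
subst f2 g2.
by rewrite (proof_irrelevance _ k1 k2) (proof_irrelevance _ k1' k2')
  (proof_irrelevance _ h1 h2).
Qed.

Lemma act_inv (X : nominal) (q : fperm) (x : X) :
  act (fperm_inv q) (act q x) = x.
Proof.
rewrite -act_comp.
have -> : fperm_comp (fperm_inv q) q = fperm_id.
  by apply: fperm_eq => a /=; rewrite pfK.
exact: act_id.
Qed.

Lemma fixes_inv p (A : atom -> Prop) : fixes p A -> fixes (fperm_inv p) A.
Proof. by move=> H a Ha /=; rewrite -{1}(H a Ha) pfK. Qed.

Lemma fixes_comp p q (A : atom -> Prop) : fixes p A -> fixes q A ->
  fixes (fperm_comp p q) A.
Proof. by move=> Hp Hq a Ha /=; rewrite Hq // Hp. Qed.

Lemma orb_refl (X : nominal) N (x : X) : orb N x x.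
Proof. by exists fperm_id; [move=> a _ | rewrite act_id]. Qed.

Lemma orb_eq (X : nominal) N (x y : X) : orb N x y -> orb N y = orb N x.
Proof.
case=> q Hq ->; apply: functional_extensionality => z.
apply: propositional_extensionality; split.
- case=> p Hp ->; exists (fperm_comp p q); first exact: fixes_comp.
  by rewrite act_comp.
- case=> p Hp ->; exists (fperm_comp p (fperm_inv q)).
    by apply: fixes_comp => //; apply: fixes_inv.
  by rewrite act_comp act_inv.
Qed.

Lemma pick_z (X : nominal) (N : seq atom) (b : atom) (S : X -> Prop) O :
  b \notin N -> orbs N (swap_union N b S) O -> exists z, S z /\ O = orb N z.
Proof.
move=> bN [y [a aN [x Sx ->]] ->]; exists x; split => //.
apply: orb_eq; exists (transp a b) => //.
move=> c cN /=; rewrite /swap_fun.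
case: eqP => [E|_]; first by subst c; rewrite cN in aN.
case: eqP => [E|_] //; by subst c; rewrite cN in bN.
Qed.

Theorem mainTheorem6 (X : nominal) (N : seq atom) (b : atom) (S : X -> Prop) :
  b \notin N ->
  supports_set (fun a => a \in b :: N) S ->
  exists f : {O : X -> Prop | orbs N (swap_union N b S) O} ->
             {O : X -> Prop | orbs (b :: N) S O},
    injective f.
Proof.
move=> bN _.
pose zf (u : {O : X -> Prop | orbs N (swap_union N b S) O}) :=
  proj1_sig (constructive_indefinite_description _ (@pick_z X N b S _ bN (proj2_sig u))).
have zP : forall u, S (zf u) /\ proj1_sig u = orb N (zf u).
  by move=> u; rewrite /zf; case: constructive_indefinite_description.
exists (fun u => exist _ (orb (b :: N) (zf u)) (ex_intro2 _ _ (zf u) (proj1 (zP u)) erefl)).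
move=> u1 u2 E.
have E' := f_equal (@proj1_sig _ _) E; simpl in E'.
have H : orb N (zf u2) (zf u1).
  have : orb (b :: N) (zf u2) (zf u1) by rewrite -E'; apply: orb_refl.
  case=> p Hp ->; exists p => // a aN; by apply: Hp; rewrite inE aN orbT.
have e1 := proj2 (zP u1). have e2 := proj2 (zP u2).
have EO : proj1_sig u1 = proj1_sig u2 by rewrite e1 e2 (@orb_eq X N _ _ H).
clear -EO; case: u1 u2 EO => [O1 P1] [O2 P2] /= EO.
subst O2; by rewrite (proof_irrelevance _ P1 P2).
Qed.
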